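(* Let $C$ be an almost-clique with $|C|=\Delta+k$ for some $k>0$, and let $t$ denote the total number of edges with one endpoint in $C$ and the other endpoint outside $C$. Then $|\mathcal{M}_N|\ge\frac{k-1}{100\varepsilon}+\frac{t}{100\varepsilon\Delta}$.
   Context: $G=(V,E)$ is a graph with maximum degree at most $\Delta$, and $0<\varepsilon<1$. $C\subseteq V$ is a vertex set (almost-clique); $\overline{E(C)}$ denotes the set of non-edges of $C$, i.e. unordered pairs of distinct vertices of $C$ not joined by an edge. $\mathcal{M}_N$ is the non-edge matching maintained by the algorithm for $C$: a matching in the graph $(C,\overline{E(C)})$ which is guaranteed to satisfy $|\mathcal{M}_N|\ge\frac{|\overline{E(C)}|}{50\varepsilon\Delta}$. *)

(* Defs.v *)
From HB Require Import structures.
From mathcomp Require Import all_boot all_order all_algebra.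
Set Implicit Arguments. Unset Strict Implicit. Unset Printing Implicit Defensive.

Definition simple_graph (T : finType) (e : rel T) : Prop :=
  symmetric e /\ irreflexive e.

Definition nbhd (T : finType) (e : rel T) (v : T) : {set T} := [set u | e v u].
Definition max_deg_le (T : finType) (e : rel T) (D : nat) : Prop :=
  forall v : T, #|nbhd e v| <= D.

Definition nonedges (T : finType) (e : rel T) (C : {set T}) : {set {set T}} :=
  [set [set x; y] | x in C, y in C & (x != y) && ~~ e x y].

Definition nonedge_matching (T : finType) (e : rel T) (C : {set T})
    (M : {set {set T}}) : Prop :=
  M \subset nonedges e C /\ trivIset M.

(* Number of edges with exactly one endpoint in C (counted as ordered pairs (inside, outside),
   which is a bijection with the unordered cut edges). *)
Definition cut_edges (T : finType) (e : rel T) (C : {set T}) : nat :=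
  #|[set p : T * T | (p.1 \in C) && (p.2 \notin C) && e p.1 p.2]|.

(* Main.v *)
Require Import Defs.
From mathcomp Require Import all_boot all_order all_algebra zify.
From mathcomp Require Import ring lra.

Lemma nonedge_count (T : finType) (e : rel T) (C : {set T}) :
  #|[set p : T * T | [&& p.1 \in C, p.2 \in C, p.1 != p.2 & ~~ e p.1 p.2]]|
  <= 2 * #|nonedges e C|.
Proof.
set P := [set p : T * T | _].
pose f (p : T * T) := ([set p.1; p.2], (enum_rank p.1 < enum_rank p.2)%N).
have inj : {in P &, injective f}.
  move=> [a b] [c d]; rewrite !inE /= => /and4P[_ _ ab _] /and4P[_ _ cd _].
  rewrite /f /= => -[] E B.
  have : c \in [set a; b] by rewrite E !inE eqxx.
  have : d \in [set a; b] by rewrite E !inE eqxx orbT.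
  rewrite !inE => /orP[]/eqP ? /orP[]/eqP ?; subst; rewrite ?eqxx // in cd *.
  exfalso; move: B.
  case: (ltngtP (enum_rank a) (enum_rank b)) => // h.
  by have/enum_rank_inj {}h := val_inj h; rewrite h eqxx in ab.
rewrite -(card_in_imset inj) mulnC.
have -> : 2 = #|[set: bool]| by rewrite cardsT card_bool.
rewrite -cardsX.
apply: subset_leq_card; apply/subsetP => _ /imsetP[[a b] + ->].
rewrite !inE /= => /and4P[aC bC ab nab]; rewrite andbT.
apply/imset2P; exists a b => //; rewrite inE bC /= ab //.
Qed.

Lemma card_pairs (T : finType) (X : {set T * T}) :
  #|X| = \sum_x #|[set y | (x, y) \in X]|.
Proof.
rewrite -sum1_card.
rewrite (eq_bigr (fun x => \sum_(y | (x, y) \in X) 1)); last first.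
  by move=> x _; rewrite -sum1_card; apply: eq_bigl => y; rewrite inE.
rewrite pair_big_dep /=; apply: eq_bigl => -[a b] //.
Qed.

Lemma per_vertex (T : finType) (e : rel T) (C : {set T}) D x :
  max_deg_le e D -> x \in C ->
  #|C| + #|nbhd e x :\: C| <=
  #|[set y | [&& x \in C, y \in C, x != y & ~~ e x y]]| + D + 1.
Proof.
move=> hD xC.
set A := [set y | _]; set N := nbhd e x.
have h1 := cardsD1 x C; rewrite xC in h1.
have h2 : #|C :\ x| <= #|A| + #|N :&: C|.
  apply: (@leq_trans #|A :|: (N :&: C)|); last by rewrite cardsU leq_subr.
  apply: subset_leq_card; apply/subsetP => y; rewrite !inE => /andP[yx yC].
  case exy: (e x y); first by rewrite yC orbT.
  by rewrite xC yC eq_sym yx.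
have h3 := cardsID C N.
have h4 := hD x.
rewrite -/N in h4.
lia.
Qed.
Import Order.TTheory GRing.Theory Num.Theory.

Lemma key (T : finType) (e : rel T) (Delta : nat) (C : {set T}) (k : nat) :
  max_deg_le e Delta -> (0 < k)%N -> #|C| = (Delta + k)%N ->
  (Delta * (k - 1) + cut_edges e C <= 2 * #|nonedges e C|)%N.
Proof.
move=> hD k0 hC.
apply: (leq_trans _ (@nonedge_count T e C)).
set P := [set p : T * T | _].
have eP : #|P| = \sum_(x in C) #|[set y | [&& x \in C, y \in C, x != y & ~~ e x y]]|.
  rewrite card_pairs (bigID (mem C)) /= [X in _ + X]big1 ?addn0; last first.
    by move=> x /negbTE xC; apply: eq_card0 => y; rewrite !inE /= xC.
  by apply: eq_bigr => x _; apply: eq_card => y; rewrite !inE.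
have eT : cut_edges e C = \sum_(x in C) #|nbhd e x :\: C|.
  rewrite /cut_edges card_pairs (bigID (mem C)) /= [X in _ + X]big1 ?addn0; last first.
    by move=> x /negbTE xC; apply: eq_card0 => y; rewrite !inE /= xC.
  by apply: eq_bigr => x xC; apply: eq_card => y; rewrite !inE /= xC.
have hs : (\sum_(x in C) (#|C| + #|nbhd e x :\: C|) <=
   \sum_(x in C) (#|[set y | [&& x \in C, y \in C, x != y & ~~ e x y]]| + Delta + 1))%N.
  by apply: leq_sum => x xC; apply: (@per_vertex T e C Delta x).
rewrite !big_split /= !sum_nat_const -eP -eT in hs.
rewrite hC in hs; nia.
Qed.

Local Open Scope ring_scope.

Theorem lemma16 (R : realFieldType) (T : finType) (e : rel T) (Delta : nat)
    (eps : R) (C : {set T}) (M : {set {set T}}) (k : nat) :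
  simple_graph e ->
  max_deg_le e Delta ->
  (0 < Delta)%N ->
  0 < eps -> eps < 1 ->
  nonedge_matching e C M ->
  (#|nonedges e C|%:R / (50 * eps * Delta%:R) <= #|M|%:R) ->
  (0 < k)%N ->
  #|C| = (Delta + k)%N ->
  (k%:R - 1) / (100 * eps) + (cut_edges e C)%:R / (100 * eps * Delta%:R)
    <= #|M|%:R.
Proof.
move=> _ hD D0 e0 _ _ hM k0 hC.
have := @key T e Delta C k hD k0 hC.
rewrite -(ler_nat R) natrD !natrM natrB // => H.
apply: le_trans hM.
have d0 : 0 < Delta%:R :> R by rewrite ltr0n.
set d := Delta%:R in d0 H *.
set t := (cut_edges e C)%:R in H *.
set n := #|nonedges e C|%:R in H *.
have -> : (k%:R - 1) / (100 * eps) + t / (100 * eps * d)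
   = (d * (k%:R - 1) + t) / (100 * eps * d).
  by field; rewrite ?gt_eqF ?mulr_gt0.
have -> : n / (50 * eps * d) = (2 * n) / (100 * eps * d).
  by field; rewrite ?gt_eqF ?mulr_gt0.
apply: ler_wpM2r => //.
by rewrite invr_ge0 ltW // !mulr_gt0.
Qed.
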